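(* Let $q$ be a prime power, $d$ a positive integer, and $m,n\ge 1$. Let $\Phi = (\phi_1, \ldots, \phi_n) : \mathbb{F}_q^m \to \mathbb{F}_q^n$ be a polynomial map with $\phi_i \in \mathbb{F}_q[x_1, \ldots, x_m]$ and $\deg \phi_i \le d$ for all $1 \le i \le n$. Suppose there is $\mu \in \mathbb{F}_q[x_1, \ldots, x_m]$ with $\sum_{a \in \Phi^{-1}(0)} \mu(a) \neq 0$. Then there exists a polynomial $P \in \mathbb{F}_q[x_1, \ldots, x_n]$ of total degree at most $(q-1)(n - m/d) + (\deg \mu)/d$ such that $P(0) \neq 0$ and $\operatorname{supp}(P) \subset \operatorname{im}(\Phi)$.
   Context: For $P \in \mathbb{F}_q[x_1,\ldots,x_n]$, $\operatorname{supp}(P) = \{x \in \mathbb{F}_q^n : P(x) \neq 0\}$. $\deg$ denotes total degree, and $\operatorname{im}(\Phi)$ is the image of $\Phi$. *)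

(* Defs.v *)
From HB Require Import structures.
From mathcomp Require Import all_boot all_order all_algebra.
From mathcomp Require Import finalg.
From mathcomp Require Import mpoly.
Set Implicit Arguments. Unset Strict Implicit. Unset Printing Implicit Defensive.
Import Order.TTheory GRing.Theory Num.Theory.
Local Open Scope ring_scope.

(* Total degree of a multivariate polynomial: msize p = 1 + deg p (0 for p = 0). *)
Definition tdeg (R : ringType) (k : nat) (p : {mpoly R[k]}) : nat := (msize p).-1.

Definition polymap (F : ringType) (m n : nat) (Phi : 'I_n -> {mpoly F[m]})
  (a : 'I_m -> F) : 'I_n -> F := fun i => (Phi i).@[a].

(* Main.v *)
Require Import Defs.
From HB Require Import structures.
From mathcomp Require Import all_boot all_order all_algebra all_fingroup all_solvable.
From mathcomp Require Import finalg finfield.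
From mathcomp Require Import mpoly.
From mathcomp Require Import ring lra zify.
Import Order.TTheory GRing.Theory Num.Theory.
Local Open Scope ring_scope.

Section Helpers.
Variable F : finFieldType.

Lemma card_natr0 : (#|F|%:R : F) = 0.
Proof.
have := @expg_cardG _ [set: F] (GRing.one F) (in_setT _).
by rewrite cardsT FinRing.zmodXgE.
Qed.

Lemma card_gt1 : (1 < #|F|)%N.
Proof. exact: card_finNzRing_gt1. Qed.

Lemma fermat (x : F) : x != 0 -> x ^+ #|F|.-1 = 1.
Proof.
move=> nz; apply: (mulIf nz); rewrite mul1r -exprSr prednK ?expf_card //.
by have := card_gt1; lia.
Qed.

Lemma sum_pow0 k : (k < #|F|.-1)%N -> \sum_(t : F) t ^+ k = 0.
Proof.
move=> hk; case: k hk => [|k] hk.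
  by rewrite (eq_bigr (fun _ => 1)) ?sumr_const ?card_natr0 // => t _; rewrite expr0.
case: (pickP (fun c : F => (c != 0) && (c ^+ k.+1 != 1))) => [c /andP[nzc ck] | H]; last first.
  have H' : forall c : F, c != 0 -> c ^+ k.+1 = 1.
    by move=> c nzc; have := H c; rewrite nzc /= => /negbFE/eqP.
  pose rs := [seq x <- enum F | x != 0].
  have: (size rs < size (('X^(k.+1) - 1)%R : {poly F}))%N.
    apply: max_poly_roots.
    - by rewrite -size_poly_eq0 size_XnsubC.
    - apply/allP=> x; rewrite mem_filter => /andP[nx _].
      by rewrite rootE !hornerE H' // subrr.
    - by rewrite filter_uniq ?enum_uniq.
  rewrite size_XnsubC // size_filter.
  have -> : count (fun x : F => x != 0) (enum F) = #|F|.-1.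
    rewrite -(cardC1 (0:F)) cardE /enum_mem size_filter count_filter.
    by apply: eq_count => x; rewrite !inE andbT.
  by move=> h; exfalso; lia.
have e : \sum_(t : F) t ^+ k.+1 = c ^+ k.+1 * \sum_(t : F) t ^+ k.+1.
  rewrite mulr_sumr (reindex_inj (mulfI nzc)) /=.
  by apply: eq_bigr => t _; rewrite exprMn.
apply/eqP; move/eqP: e; rewrite -subr_eq0 -{1}[\sum_t _]mul1r -mulrBl mulf_eq0.
by rewrite subr_eq0 eq_sym (negbTE ck).
Qed.

Lemma sum_meval0 m (r : {mpoly F[m]}) :
  (msize r <= m * #|F|.-1)%N -> \sum_(a : {ffun 'I_m -> F}) r.@[a] = 0.
Proof.
move=> hr.
under eq_bigr => a _ do rewrite mevalE.
rewrite exchange_big /=; apply: big1_seq => al /andP[_ hal].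
rewrite -mulr_sumr.
have -> : \sum_(a : {ffun 'I_m -> F}) \prod_i a i ^+ al i = \prod_i \sum_(t:F) t ^+ al i.
  by rewrite bigA_distr_bigA.
case: (pickP (fun i => (al i < #|F|.-1)%N)) => [i hi | H].
  by rewrite (bigD1 i) //= sum_pow0 // mul0r mulr0.
exfalso.
have h1 := msize_mdeg_lt hal.
have : (m * #|F|.-1 <= mdeg al)%N.
  rewrite mdegE -[m in (m * _)%N]card_ord -sum_nat_const.
  by apply: leq_sum => i _; have := H i; rewrite /= ltnNge => /negbFE.
lia.
Qed.

End Helpers.

Section Tdeg.
Context {R : idomainType} {k : nat}.
Implicit Types p q : {mpoly R[k]}.

Lemma tdeg0 : tdeg (0 : {mpoly R[k]}) = 0%N.
Proof. by rewrite /tdeg msize0. Qed.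

Lemma tdegM p q : (tdeg (p * q) <= tdeg p + tdeg q)%N.
Proof.
have [->|np] := eqVneq p 0; first by rewrite mul0r tdeg0.
have [->|nq] := eqVneq q 0; first by rewrite mulr0 tdeg0.
rewrite /tdeg msizeM //.
have := msize_poly_eq0 p; have := msize_poly_eq0 q.
rewrite (negbTE np) (negbTE nq); case: (msize p); case: (msize q) => //=; lia.
Qed.

Lemma tdegC c : tdeg (c%:MP : {mpoly R[k]}) = 0%N.
Proof. by rewrite /tdeg msizeC; case: (c != 0). Qed.

Lemma tdegX p j : (tdeg (p ^+ j) <= j * tdeg p)%N.
Proof.
elim: j => [|j ih]; first by rewrite expr0 -[1]/(1%:MP) tdegC.
rewrite exprS; apply: leq_trans (tdegM _ _) _; rewrite mulSn; lia.
Qed.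

Lemma tdegD p q : (tdeg (p + q) <= maxn (tdeg p) (tdeg q))%N.
Proof. rewrite /tdeg; have := msizeD_le p q; lia. Qed.

Lemma tdegN p : tdeg (- p) = tdeg p.
Proof. by rewrite /tdeg msizeN. Qed.

Lemma tdegZ c p : (tdeg (c *: p) <= tdeg p)%N.
Proof. rewrite /tdeg; have := msizeZ_le p c; lia. Qed.

Lemma tdeg_prod (I : finType) (f : I -> {mpoly R[k]}) :
  (tdeg (\prod_i f i) <= \sum_i tdeg (f i))%N.
Proof.
elim/big_rec2: _ => [|i s p _ ih]; first by rewrite -[1]/(1%:MP) tdegC.
apply: leq_trans (tdegM _ _) _; lia.
Qed.

Lemma msize_tdeg p : (msize p <= (tdeg p).+1)%N.
Proof. by rewrite /tdeg; case: (msize p). Qed.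
End Tdeg.

Section Main.
Variable F : finFieldType.
Local Notation N := (#|F|.-1).

Lemma scalar_id (c y : F) :
  \sum_(k < N.+1) (((k == 0%N :> nat)%:R - 'C(N, k)%:R * (-1) ^+ k * c ^+ (N - k)) * y ^+ k)
  = (c == y)%:R.
Proof.
under eq_bigr => k _ do rewrite mulrBl.
rewrite sumrB big_ord_recl /= mul1r expr0.
rewrite big1 ?addr0; last by move=> i _; rewrite mul0r.
have -> : \sum_(i < N.+1) ('C(N, i)%:R * (-1) ^+ i * c ^+ (N - i) * y ^+ i) = (c + - y) ^+ N.
  rewrite exprDn; apply: eq_bigr => i _; rewrite [in RHS]exprNn -mulr_natl; ring.
have hN : (0 < N)%N by have := card_gt1 F; lia.
case: (eqVneq c y) => [->|ne]; first by rewrite subrr expr0n gtn_eqF // subr0.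
by rewrite fermat ?subrr // subr_eq0.
Qed.

Variables (m n : nat) (Phi : 'I_n -> {mpoly F[m]}) (mu : {mpoly F[m]}).

Definition Gp (i : 'I_n) (k : 'I_N.+1) : {mpoly F[m]} :=
  ((k == 0%N :> nat)%:R)%:MP - ('C(N, k)%:R * (-1) ^+ k) *: (Phi i ^+ (N - k)).

Definition Cf (ka : {ffun 'I_n -> 'I_N.+1}) : F :=
  \sum_(a : {ffun 'I_m -> F}) (mu * \prod_i Gp i (ka i)).@[a].

Lemma Gp_eval i k (a : 'I_m -> F) :
  (Gp i k).@[a] = (k == 0%N :> nat)%:R - 'C(N, k)%:R * (-1) ^+ k * (Phi i).@[a] ^+ (N - k).
Proof. by rewrite /Gp mevalB mevalC mevalZ rmorphXn. Qed.

Lemma full_sum (y : 'I_n -> F) :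
  \sum_(ka : {ffun 'I_n -> 'I_N.+1}) Cf ka * \prod_i y i ^+ ka i
  = \sum_(a : {ffun 'I_m -> F} | [forall i, polymap Phi a i == y i]) mu.@[a].
Proof.
rewrite [RHS]big_mkcond /=.
have step : forall a : {ffun 'I_m -> F},
  (if [forall i, polymap Phi a i == y i] then mu.@[a] else 0) =
  mu.@[a] * \prod_i \sum_(k < N.+1) ((Gp i k).@[a] * y i ^+ k).
  move=> a; under eq_bigr => i _ do under eq_bigr => k _ do rewrite Gp_eval.
  under eq_bigr => i _ do rewrite scalar_id.
  case: forallP => [h|h].
    by rewrite big1 ?mulr1 // => i _; rewrite h.
  have [i hi] : exists i, polymap Phi a i != y i.
    by apply/existsP; apply: contra_notT h => /existsPn hn i; apply/negPn.
  by rewrite (bigD1 i) //= /polymap (negbTE hi) mul0r mulr0.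
under [RHS]eq_bigr => a _ do rewrite step bigA_distr_bigA mulr_sumr.
rewrite exchange_big /=; apply: eq_bigr => ka _.
rewrite /Cf mulr_suml; apply: eq_bigr => a _.
by rewrite mevalM rmorph_prod big_split /= mulrA.
Qed.

Lemma Cf0 d (hdeg : forall i, (tdeg (Phi i) <= d)%N) (ka : {ffun 'I_n -> 'I_N.+1}) :
  (d * N * n + tdeg mu < d * \sum_i ka i + m * N)%N -> Cf ka = 0.
Proof.
move=> h; apply: sum_meval0.
apply: leq_trans (msize_tdeg _) _.
have h1 : (tdeg (mu * \prod_i Gp i (ka i)) <= tdeg mu + \sum_i d * (N - ka i))%N.
  apply: leq_trans (tdegM _ _) _; rewrite leq_add2l.
  apply: leq_trans (tdeg_prod _ _) _; apply: leq_sum => i _.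
  rewrite /Gp; apply: leq_trans (tdegD _ _) _; rewrite tdegN tdegC max0n.
  apply: leq_trans (tdegZ _ _) _; apply: leq_trans (tdegX _ _) _.
  by rewrite mulnC leq_mul2r hdeg orbT.
have h2 : (\sum_i d * (N - ka i) + d * \sum_i ka i = d * N * n)%N.
  rewrite big_distrr -big_split /=.
  rewrite (eq_bigr (fun _ => d * N)%N) ?sum_nat_const ?card_ord; last first.
    by move=> i _; rewrite -mulnDr subnK // -ltnS.
  by rewrite mulnC.
move: h h1 h2; set X := (\sum_i _)%N; set S := (\sum_i _)%N; set T := tdeg _.
set A := (d * N * n)%N; set B := (d * S)%N; set C := (m * N)%N; set D := (d * X)%N; set E := tdeg _; lia.
Qed.
End Main.

Theorem lemma2p2 (F : finFieldType) (d m n : nat)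
  (hd : (0 < d)%N) (hm : (1 <= m)%N) (hn : (1 <= n)%N)
  (Phi : 'I_n -> {mpoly F[m]})
  (hdeg : forall i : 'I_n, (tdeg (Phi i) <= d)%N)
  (mu : {mpoly F[m]})
  (hmu : \sum_(a : {ffun 'I_m -> F} | [forall i, polymap Phi a i == 0]) mu.@[a] != 0) :
  exists P : {mpoly F[n]},
    ((tdeg P)%:R <= (#|F|.-1)%:R * (n%:R - m%:R / d%:R) + (tdeg mu)%:R / d%:R :> rat)
    /\ P.@[fun _ : 'I_n => 0] != 0
    /\ (forall y : {ffun 'I_n -> F}, P.@[y] != 0 ->
          exists a : {ffun 'I_m -> F}, forall i : 'I_n, polymap Phi a i = y i).
Proof.
set N := #|F|.-1.
pose small (ka : {ffun 'I_n -> 'I_N.+1}) :=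
  (d * \sum_i (ka i : nat) + m * N <= d * N * n + tdeg mu)%N.
pose mono (ka : {ffun 'I_n -> 'I_N.+1}) : 'X_{1..n} := [multinom (ka i : nat) | i < n].
pose P := \sum_(ka | small ka) Cf F m n Phi mu ka *: 'X_[mono ka].
have evalP : forall y : 'I_n -> F,
    P.@[y] = \sum_(a : {ffun 'I_m -> F} | [forall i, polymap Phi a i == y i]) mu.@[a].
  move=> y; rewrite -(@full_sum F m n Phi mu y) /P raddf_sum /= [RHS](bigID small) /=.
  rewrite [X in _ + X]big1 ?addr0.
    apply: eq_bigr => ka _; rewrite mevalZ mevalX; congr (_ * _).
    by apply: eq_bigr => i _; rewrite mnmE.
  move=> ka hns; rewrite (@Cf0 F m n Phi mu d hdeg) ?mul0r //.
  by move: hns; rewrite /small -ltnNge.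
have hP0 : P.@[fun _ : 'I_n => 0] != 0 by rewrite evalP.
have sum0 : \sum_i (([ffun=> ord0] : {ffun 'I_n -> 'I_N.+1}) i : nat) = 0%N.
  by rewrite big1 // => i _; rewrite ffunE.
have small0 : small [ffun=> ord0].
  apply/negPn/negP => hns; move: hP0; rewrite /P big1 ?meval0 ?eqxx // => ka hs.
  by exfalso; move/negP: hns; apply; rewrite /small sum0; move: hs; rewrite /small; lia.
have hM : (msize P <= (\max_(ka | small ka) \sum_i (ka i : nat)).+1)%N.
  apply: (leq_trans (msize_sum _ _ _)).
  apply/bigmax_leqP => ka hs; apply: leq_trans (msizeZ_le _ _) _.
  rewrite msizeX ltnS mdegE.
  rewrite (eq_bigr (fun i => (ka i : nat))); last by move=> i _; rewrite mnmE.
  exact: (leq_bigmax_cond ka).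
set M := (\max_(ka | small ka) _)%N in hM.
have hM2 : (d * M + m * N <= d * N * n + tdeg mu)%N.
  rewrite /M; apply: (big_ind (fun x => (d * x + m * N <= d * N * n + tdeg mu)%N)).
  - by move: small0; rewrite /small sum0.
  - by move=> x y hx hy; rewrite /maxn; case: ltnP.
  - by move=> ka hs.
have hT : (tdeg P <= M)%N by rewrite /tdeg; move: hM; case: (msize P).
exists P; split; last split => //.
  apply: (@le_trans _ _ (M%:R : rat)); first by rewrite ler_nat.
  have hd' : (0 : rat) < d%:R by rewrite ltr0n.
  rewrite -(ler_pM2r hd').
  have -> : ((N%:R : rat) * (n%:R - m%:R / d%:R) + (tdeg mu)%:R / d%:R) * d%:R
      = N%:R * n%:R * d%:R - N%:R * m%:R + (tdeg mu)%:R.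
    by field; rewrite pnatr_eq0 -lt0n.
  have := hM2; rewrite -(ler_nat rat) !natrD !natrM => h.
  lra.
move=> y; rewrite evalP => hy.
case: (pickP (fun a : {ffun 'I_m -> F} => [forall i, polymap Phi a i == y i])) => [a ha | H].
  by exists a => i; move/forallP: ha => /(_ i) /eqP.
by move: hy; rewrite big_pred0 ?eqxx.
Qed.
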